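(* Let $r,s$ be positive integers, let $P$ be a lattice path and let $Q=P+(r,s)$ be its translate by $(r,s)$. Suppose there are integers $i<k$ such that $P$ and $Q$ both meet the lines $x+y=i$ and $x+y=k$, and $$x_i(P)>x_i(Q)\quad\text{and}\quad x_k(P)\le x_k(Q).$$ Then $P$ is invalid.
   Context: A lattice path is a path in $\mathbb{Z}^2$ consisting of unit steps north ($N$-steps, adding $(0,1)$) and east ($E$-steps, adding $(1,0)$). For fixed positive integers $r,s$, points $v,w\in\mathbb{Z}^2$ are equivalent if $v-w=\ell(r,s)$ for some $\ell\in\mathbb{Z}$; $[v]$ denotes the class of $v$. A lattice path $P$ is valid if whenever $P$ enters a point $v$ with an $E$-step, every later point of $P$ in $[v]$ is also entered by an $E$-step; otherwise it is invalid. For a path $P$ and a point $v$, $P+v$ is the path obtained by adding $v$ to every point of $P$. For a lattice path $P$ and integer $i$, $v_i(P)=(x_i(P),y_i(P))$ denotes the (unique) point where $P$ meets the line $x+y=i$. *)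

(* Defs.v *)
From Stdlib Require Import ZArith List.
Open Scope Z_scope.

Definition point := (Z * Z)%type.

Definition padd (p q : point) : point := (fst p + fst q, snd p + snd q).

(* A (finite) lattice path: a starting point and a list of unit steps;
   [true] = E-step (1,0), [false] = N-step (0,1). *)
Record lpath := LPath { start : point; steps : list bool }.

Definition step_vec (b : bool) : point := if b then (1, 0) else (0, 1).

Fixpoint pts_from (p : point) (l : list bool) : list point :=
  p :: match l with
       | nil => nil
       | b :: l' => pts_from (padd p (step_vec b)) l'
       end.

Definition points (P : lpath) : list point := pts_from (start P) (steps P).
Definition len (P : lpath) : nat := length (steps P).
Definition pt (P : lpath) (j : nat) : point := nth j (points P) (start P).

Definition enteredE (P : lpath) (j : nat) : Prop :=
  (1 <= j <= len P)%nat /\ nth (j - 1) (steps P) false = true.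

Definition equiv (r s : Z) (v w : point) : Prop :=
  exists l : Z, fst v - fst w = l * r /\ snd v - snd w = l * s.

Definition valid (r s : Z) (P : lpath) : Prop :=
  forall j m : nat, enteredE P j -> (j < m <= len P)%nat ->
    equiv r s (pt P j) (pt P m) -> enteredE P m.

Definition invalid (r s : Z) (P : lpath) : Prop := ~ valid r s P.

Definition translate (P : lpath) (v : point) : lpath :=
  LPath (padd (start P) v) (steps P).

Definition start_level (P : lpath) : Z := fst (start P) + snd (start P).

(* P meets the line x + y = i (each step raises x+y by exactly 1). *)
Definition meets (P : lpath) (i : Z) : Prop :=
  start_level P <= i <= start_level P + Z.of_nat (len P).

Definition v_ (P : lpath) (i : Z) : point := pt P (Z.to_nat (i - start_level P)).
Definition x_ (P : lpath) (i : Z) : Z := fst (v_ P i).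

(* Main.v *)
Require Import Defs.
From Stdlib Require Import ZArith List Lia.
Open Scope Z_scope.

Lemma pts_head p l d : nth 0 (pts_from p l) d = p.
Proof. destruct l; reflexivity. Qed.

Lemma pts_nth l : forall p j d, (j < length l)%nat ->
  nth (S j) (pts_from p l) d = padd (nth j (pts_from p l) d) (step_vec (nth j l false)).
Proof.
  induction l as [|b l IH]; intros p j d H; simpl in H; [lia|].
  destruct j as [|j].
  - simpl. apply pts_head.
  - change (nth (S (S j)) (pts_from p (b :: l)) d) with (nth (S j) (pts_from (padd p (step_vec b)) l) d).
    change (nth (S j) (pts_from p (b :: l)) d) with (nth j (pts_from (padd p (step_vec b)) l) d).
    rewrite IH by lia. reflexivity.
Qed.

Lemma pt_succ P j : (j < len P)%nat ->
  pt P (S j) = padd (pt P j) (step_vec (nth j (steps P) false)).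
Proof. intros H. unfold pt, points. apply pts_nth. exact H. Qed.

Lemma pt_translate P v j : (j <= len P)%nat -> pt (translate P v) j = padd (pt P j) v.
Proof.
  induction j as [|j IH]; intros H.
  - unfold pt, points. simpl. rewrite !pts_head. reflexivity.
  - rewrite pt_succ by (unfold len in *; simpl; lia).
    rewrite pt_succ by lia. rewrite IH by lia. simpl.
    destruct (pt P j), v, (nth j (steps P) false); unfold padd; simpl; f_equal; lia.
Qed.

Lemma pt_level P j : (j <= len P)%nat ->
  fst (pt P j) + snd (pt P j) = start_level P + Z.of_nat j.
Proof.
  induction j as [|j IH]; intros H.
  - unfold pt, points. rewrite pts_head. unfold start_level. lia.
  - rewrite pt_succ by lia. specialize (IH ltac:(lia)).
    destruct (pt P j), (nth j (steps P) false); unfold padd in *; simpl in *; lia.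
Qed.

Lemma ivt (g : nat -> Z) a b : (a < b)%nat -> g a > 0 -> g b <= 0 ->
  exists j, (a <= j < b)%nat /\ g j > 0 /\ g (S j) <= 0.
Proof.
  induction b as [|b IH]; intros H1 H2 H3; [lia|].
  destruct (Z_le_gt_dec (g b) 0) as [Hb|Hb].
  - destruct (IH ltac:(assert (a <> b) by (intro; subst; lia); lia) H2 Hb) as [j Hj].
    exists j. lia.
  - exists b. lia.
Qed.

Theorem mainTheorem2 (r s : Z) (hr : 0 < r) (hs : 0 < s) (P : lpath) (i k : Z) :
  i < k ->
  meets P i -> meets (translate P (r, s)) i ->
  meets P k -> meets (translate P (r, s)) k ->
  x_ P i > x_ (translate P (r, s)) i ->
  x_ P k <= x_ (translate P (r, s)) k ->
  invalid r s P.
Proof.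
  intros Hik HPi HQi HPk HQk Hi Hk Hval.
  set (L := start_level P) in *.
  set (n := len P) in *.
  assert (HL : start_level (translate P (r, s)) = L + r + s)
    by (unfold L, start_level, translate, padd; simpl; lia).
  assert (Hn : len (translate P (r, s)) = n) by reflexivity.
  unfold meets in *. rewrite HL, Hn in *. fold L n in HPi, HPk.
  set (d := Z.to_nat (r + s)).
  set (a := Z.to_nat (i - L)).
  set (b := Z.to_nat (k - L)).
  set (g := fun t : nat => fst (pt P t) - fst (pt P (t - d)) - r).
  assert (HxQ : forall t, L + r + s <= t <= L + r + s + Z.of_nat n ->
     x_ (translate P (r, s)) t = fst (pt P (Z.to_nat (t - L) - d)) + r).
  { intros t Ht. unfold x_, v_. rewrite HL.
    replace (Z.to_nat (t - (L + r + s))) with (Z.to_nat (t - L) - d)%nat by lia.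
    rewrite pt_translate by lia. destruct (pt P _); reflexivity. }
  rewrite HxQ in Hi, Hk by lia.
  unfold x_, v_ in Hi, Hk. fold L in Hi, Hk. fold a in Hi. fold b in Hk.
  assert (Hab : (a < b)%nat) by (unfold a, b; lia).
assert (Hga : g a > 0) by (unfold g; cbv beta; clear -Hi Hk; lia).
  assert (Hgb : g b <= 0) by (unfold g; cbv beta; clear -Hi Hk; lia).
  destruct (ivt g a b Hab Hga Hgb) as [j [Hj [Hg1 Hg2]]].
  unfold g in Hg1, Hg2.
  assert (Hjn : (j < n)%nat) by (unfold b, d in *; lia).
  assert (Hjd : (d <= j)%nat) by (unfold a, d in *; lia).
  replace (S j - d)%nat with (S (j - d)) in Hg2 by lia.
  rewrite (pt_succ P j) in Hg2 by exact Hjn.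
  rewrite (pt_succ P (j - d)) in Hg2 by lia.
  destruct (nth j (steps P) false) eqn:E1, (nth (j - d) (steps P) false) eqn:E2;
    unfold padd in Hg2; simpl in Hg2; try lia.
  assert (Hent : enteredE P (S (j - d))).
  { split; [fold n; lia|]. simpl. rewrite Nat.sub_0_r. exact E2. }
  assert (Heq : equiv r s (pt P (S (j - d))) (pt P (S j))).
  { assert (Hd : Z.of_nat d = r + s) by (unfold d; lia). clearbody d. exists (-1).
    pose proof (pt_level P (S (j - d)) ltac:(fold n; lia)) as L1.
    pose proof (pt_level P (S j) ltac:(fold n; lia)) as L2.
    fold L in L1, L2.
    rewrite (pt_succ P j) in L2 |- * by exact Hjn.
    rewrite (pt_succ P (j - d)) in L1 |- * by lia.
    rewrite E1, E2 in *. unfold padd, step_vec in *; cbn [fst snd] in *. rewrite !Nat2Z.inj_succ in *. split; lia. }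
  assert (Hlt : (S (j - d) < S j <= len P)%nat) by (clear -Hjn Hjd hr hs; unfold n, d in *; lia).
  destruct (Hval _ _ Hent Hlt Heq) as [_ HE].
  simpl in HE. rewrite Nat.sub_0_r in HE. congruence.
Qed.
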